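(* Let $\mathcal{X}_g^*\triangleq \operatorname*{arg\,min}_{\mathbf{z}\in \mathcal{Z}} g(\mathbf{z})$ be the solution set of the lower-level problem and let $\mathcal{X}_k \triangleq \mathcal{Z} \cap \{\mathbf{s}\in\mathbb{R}^d \mid \langle \nabla g(\mathbf{x}_k), \mathbf{s}-\mathbf{x}_k\rangle \leq g(\mathbf{x}_0)-g(\mathbf{x}_k)\}$. Then for any $k\geq 0$, $\mathcal{X}^*_g \subseteq \mathcal{X}_k$.
   Context: Consider the simple bilevel problem $\min_{\mathbf{x}\in\mathbb{R}^d} f(\mathbf{x})$ s.t. $\mathbf{x}\in \operatorname*{arg\,min}_{\mathbf{z}\in\mathcal{Z}} g(\mathbf{z})$, where $\mathcal{Z}\subset\mathbb{R}^d$ is compact and convex and $g$ is convex and continuously differentiable on an open set containing $\mathcal{Z}$. Let $g^*=\min_{\mathbf{z}\in\mathcal{Z}} g(\mathbf{z})$. The points $\mathbf{x}_0,\mathbf{x}_1,\dots$ are iterates in $\mathcal{Z}$ (generated by the CG-BiO algorithm: $\mathbf{x}_0\in\mathcal{Z}$ with $g(\mathbf{x}_0)-g^*\le\epsilon_g/2$, $\mathbf{s}_k\in\operatorname*{arg\,min}_{\mathbf{s}\in\mathcal{X}_k}\langle\nabla f(\mathbf{x}_k),\mathbf{s}\rangle$, $\mathbf{x}_{k+1}=(1-\gamma_k)\mathbf{x}_k+\gamma_k\mathbf{s}_k$ with $\gamma_k\in[0,1]$). *)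

(* Defs.v *)
From HB Require Import structures.
From mathcomp Require Import all_boot all_order all_algebra.
From mathcomp Require Import all_classical all_reals all_analysis.
Set Implicit Arguments. Unset Strict Implicit. Unset Printing Implicit Defensive.
Import Order.TTheory GRing.Theory Num.Theory.
Import numFieldNormedType.Exports.
Local Open Scope classical_set_scope.
Local Open Scope ring_scope.

Definition dotv (R : realType) (d : nat) (u v : 'rV[R]_d) : R := (u *m v^T) 0 0.

Definition has_gradient_at (R : realType) (d : nat)
  (h : 'rV[R]_d -> R) (gr : 'rV[R]_d -> 'rV[R]_d) (x : 'rV[R]_d) : Prop :=
  differentiable h x /\ forall v, 'd h x v = dotv (gr x) v.

Definition convex_setR (R : realType) (d : nat) (A : set 'rV[R]_d) : Prop :=
  forall x y t, A x -> A y -> 0 <= t <= 1 -> A ((1 - t) *: x + t *: y).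

Definition convex_on (R : realType) (d : nat) (A : set 'rV[R]_d)
  (h : 'rV[R]_d -> R) : Prop :=
  forall x y t, A x -> A y -> 0 <= t <= 1 ->
    h ((1 - t) *: x + t *: y) <= (1 - t) * h x + t * h y.

Definition argmin_on (R : realType) (T : Type) (A : set T) (h : T -> R) : set T :=
  [set z | A z /\ forall w, A w -> h z <= h w].

Definition Xset (R : realType) (d : nat) (Z : set 'rV[R]_d)
  (g : 'rV[R]_d -> R) (gradg : 'rV[R]_d -> 'rV[R]_d) (x0 xk : 'rV[R]_d)
  : set 'rV[R]_d :=
  Z `&` [set s | dotv (gradg xk) (s - xk) <= g x0 - g xk].

(* Main.v *)
Require Import Defs.
From HB Require Import structures.
From mathcomp Require Import all_boot all_order all_algebra.
From mathcomp Require Import all_classical all_reals all_analysis.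
From mathcomp Require Import lra.
Import Order.TTheory GRing.Theory Num.Theory.
Import numFieldNormedType.Exports.
Local Open Scope classical_set_scope.
Local Open Scope ring_scope.

Lemma grad_ineq (R : realType) (d : nat) (Z : set 'rV[R]_d)
  (g : 'rV[R]_d -> R) (gr : 'rV[R]_d -> 'rV[R]_d) (x z : 'rV[R]_d) :
  convex_on Z g -> Z x -> Z z -> has_gradient_at g gr x ->
  dotv (gr x) (z - x) <= g z - g x.
Proof.
move=> cvx Zx Zz [dg hg].
rewrite -hg -deriveE //.
have hd : derivable g x (z - x) by exact: diff_derivable.
set q := (fun h : R => h^-1 *: ((g \o shift x) (h *: (z - x)) - g x)).
have hq : q @ 0^' --> 'D_(z - x) g x by exact: hd.
have hq' : q @ 0^'+ --> 'D_(z - x) g x.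
  apply: cvg_trans hq; move=> A /=.
  rewrite /nbhs /= /dnbhs /within /=.
  by apply: filterS => t At /gt_eqF /negbT; apply: At.
apply: (cvgr_to_le hq').
near=> t.
have t0 : 0 < t by near: t; exact: nbhs_right_gt.
have t1 : t <= 1 by near: t; exact: nbhs_right_ltW ltr01.
rewrite /q /= /GRing.scale /=.
have e : t *: (z - x) + x = (1 - t) *: x + t *: z.
  by rewrite scalerBr scalerBl scale1r addrAC [_ *: z + x]addrC addrAC.
change (t^-1 * (g (t *: (z-x) + x) - g x) <= g z - g x).
rewrite e.
have := cvx x z t Zx Zz; rewrite t1 (ltW t0) => /(_ isT) H.
rewrite ler_pdivrMl // mulrC mulrBl.
lra.
Unshelve. all: by end_near.
Qed.
Theorem lemma1 (R : realType) (d : nat) (Z U : set 'rV[R]_d)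
  (f g : 'rV[R]_d -> R) (gradf gradg : 'rV[R]_d -> 'rV[R]_d)
  (gstar eps_g : R) (x s : nat -> 'rV[R]_d) (gamma : nat -> R) :
  compact Z -> convex_setR Z ->
  open U -> Z `<=` U ->
  (forall z, U z -> has_gradient_at g gradg z) ->
  {within U, continuous gradg} ->
  convex_on Z g ->
  (exists2 z, Z z & g z = gstar) -> (forall z, Z z -> gstar <= g z) ->
  (forall z, Z z -> has_gradient_at f gradf z) ->
  Z (x 0%N) -> g (x 0%N) - gstar <= eps_g / 2 ->
  (forall k, argmin_on (Xset Z g gradg (x 0%N) (x k))
               (fun y => dotv (gradf (x k)) y) (s k)) ->
  (forall k, 0 <= gamma k <= 1) ->
  (forall k, x k.+1 = (1 - gamma k) *: x k + gamma k *: s k) ->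
  forall k, argmin_on Z g `<=` Xset Z g gradg (x 0%N) (x k).
Proof.
move=> _ cvxZ _ ZU hgrad _ cvxg _ _ _ Zx0 _ hs hgam hx.
have Zx : forall k, Z (x k).
  elim=> [|k IH] //; rewrite hx.
  have [[Zs _] _] := hs k.
  have [g0 g1] := andP (hgam k).
  by apply: cvxZ => //; rewrite g0 g1.
move=> k z [Zz zmin]; split => //=.
apply: le_trans; first exact: (@grad_ineq R d Z g gradg (x k) z cvxg (Zx k) Zz (hgrad _ (ZU _ (Zx k)))).
by rewrite lerD2r; apply: zmin.
Qed.
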